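(* Let $A$ be an alphabet of infinite cardinality $\kappa$ and let $S$ be the free semigroup over $A$. Then there exists a finite coloring of $S$ such that for no variable word $w(v)$ over $A$ is the set $\{w(a) : a \in A\}$ monochromatic.
   Context: The free semigroup $S$ over $A$ is the set of nonempty finite words over $A$ with concatenation. Given a symbol $v\notin A$, a variable word is a word over $A\cup\{v\}$ in which $v$ occurs; for $a\in A$, $w(a)$ is obtained by replacing every occurrence of $v$ in $w(v)$ by $a$. *)

(* Defs.v *)
From Stdlib Require Import List.
Import ListNotations.

Definition infinite_type (A : Type) : Prop :=
  forall s : list A, exists a : A, ~ In a s.

(* The free semigroup over A: nonempty finite words (concatenation is the
   operation; only the carrier matters for colorings). *)
Definition word (A : Type) : Type := { s : list A | s <> [] }.

(* Variable words: words over A ∪ {v}, encoded as list (option A),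
   with v = None, in which v occurs. *)
Definition is_variable_word {A : Type} (w : list (option A)) : Prop :=
  In None w.

Definition subst_var {A : Type} (w : list (option A)) (a : A) : list A :=
  map (fun x => match x with None => a | Some b => b end) w.

Lemma subst_var_nonempty {A : Type} (w : list (option A)) (a : A) :
  is_variable_word w -> subst_var w a <> [].
Proof.
  unfold is_variable_word, subst_var; destruct w; simpl; [tauto | discriminate].
Qed.

Definition inst {A : Type} (w : list (option A)) (Hw : is_variable_word w) (a : A)
  : word A := exist _ (subst_var w a) (subst_var_nonempty w a Hw).

(* Main.v *)
Require Import Defs.
From Stdlib Require Import List Lia Arith ClassicalDescription.
Import ListNotations.

Definition consts {A : Type} (w : list (option A)) : list A :=
  flat_map (fun x => match x with Some b => [b] | None => [] end) w.

Lemma in_subst {A : Type} (w : list (option A)) (a x : A) :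
  In None w -> (In x (subst_var w a) <-> x = a \/ In x (consts w)).
Proof.
  intros H. unfold subst_var, consts.
  induction w as [|y w IH]; simpl in *; [tauto|].
  destruct y as [b|]; simpl.
  - destruct H as [H|H]; [discriminate|]. specialize (IH H). intuition.
  - split.
    + intros [H1|H1]; [left; congruence|].
      destruct (classic (In None w)) as [Hn|Hn].
      * apply IH; auto.
      * clear IH. right. induction w as [|z w IH2]; simpl in *; [tauto|].
        destruct z as [c|]; simpl in *; [|tauto].
        destruct H1; [left; auto| right; apply IH2; tauto].
    + intros [H1|H1]; [left; congruence|].
      right. clear IH H. induction w as [|z w IH2]; simpl in *; [tauto|].
      destruct z as [c|]; simpl in *; intuition.
Qed.

Section S.
Context {A : Type}.
Definition deq : forall x y : A, {x = y} + {x <> y} :=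
  fun x y => excluded_middle_informative (x = y).

Definition dcount (l : list A) : nat := length (nodup deq l).

Lemma same_len (l1 l2 : list A) : NoDup l1 -> NoDup l2 ->
  (forall x, In x l1 <-> In x l2) -> length l1 = length l2.
Proof.
  intros N1 N2 H.
  assert (length l1 <= length l2) by (apply NoDup_incl_length; auto; intros x; apply H).
  assert (length l2 <= length l1) by (apply NoDup_incl_length; auto; intros x; apply H).
  lia.
Qed.

Lemma dcount_fresh (w : list (option A)) (a b : A) :
  In None w -> ~ In a (consts w) -> In b (consts w) ->
  dcount (subst_var w a) = S (dcount (subst_var w b)).
Proof.
  intros Hw Ha Hb. unfold dcount.
  transitivity (length (a :: nodup deq (consts w))).
  - apply same_len. apply NoDup_nodup.
    constructor. rewrite nodup_In; auto. apply NoDup_nodup.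
    intros x. rewrite nodup_In, in_subst by auto. simpl. rewrite nodup_In. intuition.
  - simpl. f_equal. apply same_len. apply NoDup_nodup. apply NoDup_nodup.
    intros x. rewrite !nodup_In, in_subst by auto. intuition. subst; auto.
Qed.
End S.

Theorem theorem2p10 (A : Type) (HA : infinite_type A) :
  exists (k : nat) (c : word A -> nat),
    (forall s, c s < k) /\
    forall (w : list (option A)) (Hw : is_variable_word w),
      ~ (exists i : nat, forall a : A, c (inst w Hw a) = i).
Proof.
  destruct (HA []) as [a0 _].
  destruct (HA [a0]) as [a1 Ha1].
  assert (a1 <> a0) by (intro; apply Ha1; left; auto).
  exists 4, (fun s => 2 * (Nat.modulo (dcount (proj1_sig s)) 2)
                     + (if deq (hd a0 (proj1_sig s)) a0 then 1 else 0)).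
  split.
  - intros s. destruct (deq _ _); pose proof (Nat.mod_upper_bound (dcount (proj1_sig s)) 2); lia.
  - intros w Hw [i Hi].
    destruct w as [|[b|] w'].
    + destruct Hw.
    + destruct (HA (consts (Some b :: w'))) as [f Hf].
      pose proof (Hi f) as E1. pose proof (Hi b) as E2.
      unfold inst in E1, E2; cbv beta iota in E1, E2; change (proj1_sig (exist _ ?x _)) with x in E1, E2.
      rewrite (dcount_fresh _ f b Hw Hf) in E1 by (simpl; auto).
      simpl hd in E1, E2; cbn [subst_var map] in E1, E2; fold (subst_var w' f) (subst_var w' b) in E1, E2.
      assert (K : forall n x y, x <= 1 -> y <= 1 -> 2 * Nat.modulo (S n) 2 + x <> 2 * Nat.modulo n 2 + y) by (intros n x y Hx Hy; pose proof (Nat.div_mod_eq n 2); pose proof (Nat.div_mod_eq (S n) 2); pose proof (Nat.mod_upper_bound n 2); pose proof (Nat.mod_upper_bound (S n) 2); lia).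
      revert E1 E2. generalize (dcount (b :: subst_var w' b)). intros n E1 E2.
      revert E1 E2. destruct (deq b a0); intros E1 E2;
        (eapply (K n); [| |rewrite E1, E2; reflexivity]; lia).
    + pose proof (Hi a0) as E1. pose proof (Hi a1) as E2.
      unfold inst in E1, E2; simpl in E1, E2.
      destruct (deq a0 a0); [|congruence]. destruct (deq a1 a0); [congruence|].
      pose proof (Nat.mod_upper_bound (dcount (a0 :: subst_var w' a0)) 2).
      pose proof (Nat.mod_upper_bound (dcount (a1 :: subst_var w' a1)) 2).
      lia.
Qed.
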